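(* Let $E$ be a simple type, $A_1,\dots,A_m,G$ subtypes of $E$, $t$ a normal $\lambda$-term, and $\alpha$ a free variable of $t$ which is not in application position in $t$ (no subterm of $t$ has the form $(\alpha)u$). Let $n\ge0$ and $p_n=\lambda x_1\dots\lambda x_n\lambda x\,x$. If $x_1:A_1,\dots,x_m:A_m\vdash_{\mathcal S} t[p_n/\alpha] : G$, then $Lg(E)\ge n$.
   Context: Simple types are built from type variables and type constants using $\rightarrow$ only; a subtype of $E$ is a subformula of $E$. $Lg(E)$ denotes the number of occurrences of $\rightarrow$ in $E$. The simply typed system $\mathcal S$ derives $\Gamma\vdash_{\mathcal S} t:A$ by: (ax) $\Gamma \vdash y : B$ for $y:B\in\Gamma$; ($\rightarrow_i$) from $\Gamma, x:B \vdash t : C$ infer $\Gamma \vdash \lambda x t : B \rightarrow C$; ($\rightarrow_e$) from $\Gamma \vdash u : B\rightarrow C$ and $\Gamma \vdash v : B$ infer $\Gamma \vdash (u)v : C$. $t[u/\alpha]$ is capture-avoiding substitution; normal means without $\beta$-redex. *)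

(* Defs.v *)
From Stdlib Require Import Arith List.
Import ListNotations.

Inductive stype : Type :=
| TVar : nat -> stype
| TConst : nat -> stype
| Arrow : stype -> stype -> stype.

Inductive subtype : stype -> stype -> Prop :=
| sub_refl : forall E, subtype E E
| sub_left : forall A B C, subtype A B -> subtype A (Arrow B C)
| sub_right : forall A B C, subtype A C -> subtype A (Arrow B C).

Fixpoint Lg (E : stype) : nat :=
  match E with
  | TVar _ | TConst _ => 0
  | Arrow A B => S (Lg A + Lg B)
  end.

(* Lambda terms with named variables; App u v is (u)v. *)
Inductive term : Type :=
| Var : nat -> term
| Lam : nat -> term -> term
| App : term -> term -> term.

Fixpoint normal (t : term) : bool :=
  match t with
  | Var _ => true
  | Lam _ b => normal b
  | App u v =>
      match u with Lam _ _ => false | _ => normal u && normal v end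
  end.

Fixpoint free_in (a : nat) (t : term) : bool :=
  match t with
  | Var y => Nat.eqb y a
  | Lam x b => negb (Nat.eqb x a) && free_in a b
  | App u v => free_in a u || free_in a v
  end.

Fixpoint not_app_pos (a : nat) (t : term) : bool :=
  match t with
  | Var _ => true
  | Lam _ b => not_app_pos a b
  | App u v =>
      match u with Var y => negb (Nat.eqb y a) | _ => true end
      && not_app_pos a u && not_app_pos a v
  end.

(* Substitution t[u/a].  This is capture-avoiding whenever u is closed,
   which is the only case used below (u = p_n is closed). *)
Fixpoint subst (t : term) (a : nat) (u : term) : term :=
  match t with
  | Var y => if Nat.eqb y a then u else Var y
  | Lam x b => if Nat.eqb x a then Lam x b else Lam x (subst b a u)
  | App v w => App (subst v a u) (subst w a u)
  end.

(* lams k n = \x_{k+1} ... \x_{k+n} \x0. x0  (variable names k+1..k+n, 0) *)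
Fixpoint lams (k n : nat) : term :=
  match n with
  | O => Lam 0 (Var 0)
  | S n' => Lam (S k) (lams (S k) n')
  end.

Definition pn (n : nat) : term := lams 0 n.

(* Contexts: lists of declarations, the most recent first. *)
Definition ctx := list (nat * stype).

Fixpoint lookup (G : ctx) (y : nat) : option stype :=
  match G with
  | [] => None
  | (x, B) :: G' => if Nat.eqb x y then Some B else lookup G' y
  end.

Inductive typS : ctx -> term -> stype -> Prop :=
| tS_ax : forall G y B, lookup G y = Some B -> typS G (Var y) B
| tS_lam : forall G x B C t, typS ((x, B) :: G) t C -> typS G (Lam x t) (Arrow B C)
| tS_app : forall G u v B C, typS G u (Arrow B C) -> typS G v B -> typS G (App u v) C.

(* Main.v *)
Require Import Defs.
From Stdlib Require Import Arith List Lia Bool.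

Lemma sub_Lg : forall A E, subtype A E -> Lg A <= Lg E.
Proof. induction 1; simpl; lia. Qed.

Lemma sub_arrow : forall X E, subtype X E -> forall B C, X = Arrow B C ->
  subtype B E /\ subtype C E.
Proof.
  induction 1; intros B0 C0 Heq; subst.
  - split; [apply sub_left | apply sub_right]; apply sub_refl.
  - destruct (IHsubtype _ _ eq_refl); split; apply sub_left; auto.
  - destruct (IHsubtype _ _ eq_refl); split; apply sub_right; auto.
Qed.

Lemma lams_Lg : forall n k G A, typS G (lams k n) A -> n < Lg A.
Proof.
  induction n; intros k G A H; simpl in H; inversion H; subst; simpl.
  - lia.
  - apply IHn in H4. lia.
Qed.

Lemma lookup_combine : forall xs As y B, lookup (combine xs As) y = Some B -> In B As.
Proof.
  induction xs; destruct As; simpl; intros; try discriminate.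
  destruct (a =? y); [injection H; intros; subst; auto | right; eauto].
Qed.

Definition neutral (al : nat) (t : term) : Prop :=
  match t with Var y => y <> al | Lam _ _ => False | App _ _ => True end.

Lemma main E al n : forall t, normal t = true -> not_app_pos al t = true ->
  forall Gm A, (forall y B, lookup Gm y = Some B -> subtype B E) ->
  typS Gm (subst t al (pn n)) A ->
  (subtype A E -> free_in al t = true -> n <= Lg E) /\
  (neutral al t -> subtype A E /\ (free_in al t = true -> n <= Lg E)).
Proof.
  induction t as [y | x b IH | u IHu v IHv]; intros Hn Hp Gm A HG Ht; simpl in *.
  - destruct (Nat.eqb_spec y al).
    + subst. split.
      * intros HA _. apply lams_Lg in Ht. apply sub_Lg in HA. lia.
      * intros []; reflexivity.
    + split; [intros _ Hf; discriminate|].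
      intros _. inversion Ht; subst. split; [eauto | discriminate].
  - destruct (Nat.eqb_spec x al).
    + split; [intros _ Hf; discriminate | intros []].
    + split; [|intros []].
      intros HA Hf. inversion Ht; subst.
      destruct (sub_arrow _ _ HA _ _ eq_refl) as [HB HC].
      refine (proj1 (IH Hn Hp _ _ _ H3) HC Hf).
      intros y B0 Hl. simpl in Hl. destruct (x =? y); [injection Hl; intros; subst; auto | eauto].
  - assert (Hnu : neutral al u /\ normal u = true /\ normal v = true).
    { destruct u; try discriminate; simpl in *.
      - rewrite andb_true_r in Hp. apply andb_true_iff in Hp as [H1 _].
        apply negb_true_iff in H1.
        apply Nat.eqb_neq in H1. auto.
      - apply andb_true_iff in Hn as [H1 H2]. auto. }
    destruct Hnu as [Hnu [Hnu' Hnv]].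
    apply andb_true_iff in Hp as [[_ Hpu]%andb_true_iff Hpv].
    inversion Ht; subst.
    destruct (proj2 (IHu Hnu' Hpu _ _ HG H2) Hnu) as [HBA Hfu].
    destruct (sub_arrow _ _ HBA _ _ eq_refl) as [HB HA].
    assert (Hf : free_in al u || free_in al v = true -> n <= Lg E).
    { intros Hf. apply orb_true_iff in Hf as [Hf|Hf]; auto.
      exact (proj1 (IHv Hnv Hpv _ _ HG H4) HB Hf). }
    split; auto.
Qed.

Theorem lemma2p2p6 :
  forall (E : stype) (xs : list nat) (As : list stype) (G : stype)
         (t : term) (alpha n : nat),
    length xs = length As ->
    NoDup xs ->
    Forall (fun A => subtype A E) As ->
    subtype G E ->
    normal t = true ->
    free_in alpha t = true ->
    not_app_pos alpha t = true ->
    typS (combine xs As) (subst t alpha (pn n)) G ->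
    n <= Lg E.
Proof.
  intros E xs As G t alpha n _ _ HAs HG Hn Hf Hp Ht.
  refine (proj1 (main E alpha n t Hn Hp _ _ _ Ht) HG Hf).
  intros y B Hl. apply lookup_combine in Hl.
  rewrite Forall_forall in HAs. auto.
Qed.
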